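(* Let $p=(p_N)_{N\subseteq\mathbf{U}}$ be a random partition that is positive (i.e., $p_N(\pi)>0$ for all $N\subseteq\mathbf{U}$ and $\pi\in\Pi(N)$) and generates the potential for TU games (i.e., $\mathrm{E}_p(v)=\mathrm{Pot}(v)$ for every $N\subseteq\mathbf{U}$ and every TU game $v$ on $N$, viewed as a TUX game). A restriction operator $r$ is path independent, preserves null games, and satisfies $\mathrm{Pot}^r=\mathrm{E}_p$ (on all TUX games) if and only if $r=r^p$, where $r^p$ is the restriction operator defined by $$w^{r^p}_{-i}(S,\pi)=\frac{n}{n-s}\sum_{B\in\pi\cup\{\emptyset\}}\frac{p_N(\{S\}\cup\pi_{+i\leadsto B})}{p_{N\setminus\{i\}}(\{S\}\cup\pi)}\,w(S,\pi_{+i\leadsto B})$$ for all $N\subseteq\mathbf{U}$, $w\in\mathbb{W}(N)$, $i\in N$, $(S,\pi)\in\mathcal{E}(N\setminus\{i\})$.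
   Context: $\mathbf{U}$ is a finite set of players; cardinalities of sets $N,S,T,B$ are $n,s,t,b$. $\Pi(N)$ is the set of partitions of $N$ (with $\Pi(\emptyset)=\{\emptyset\}$). A random partition is a family $p=(p_N)_{N\subseteq\mathbf{U}}$ with $p_N$ a probability distribution on $\Pi(N)$. For $\pi\in\Pi(N\setminus\{i\})$ and $B\in\pi$, $\pi_{+i\leadsto B}=(\pi\setminus\{B\})\cup\{B\cup\{i\}\}$ and $\pi_{+i\leadsto\emptyset}=\pi\cup\{\{i\}\}$. A TU game on $N$ is $v:2^N\to\mathbb{R}$ with $v(\emptyset)=0$; its subgame $v_{-i}$ is its restriction to $2^{N\setminus\{i\}}$. The potential $\mathrm{Pot}$ for TU games is the unique map with $\mathrm{Pot}$ of the game on $\emptyset$ equal to $0$ and $\sum_{i\in N}[\mathrm{Pot}(v)-\mathrm{Pot}(v_{-i})]=v(N)$; explicitly $\mathrm{Pot}(v)=\sum_{\emptyset\neq S\subseteq N}\frac{(s-1)!(n-s)!}{n!}v(S)$. The embedded coalitions of $N$ are $\mathcal{E}(N)=\{(S,\pi):S\subseteq N,\ \pi\in\Pi(N\setminus S)\}$. A TUX game (partition function game) on $N$ is $w:\mathcal{E}(N)\to\mathbb{R}$ with $w(\emptyset,\pi)=0$ for all $\pi$; $\mathbb{W}(N)$ is the set of these. A TU game $v$ is identified with the TUX game $w(S,\pi)=v(S)$. The null game $\mathbf{0}^N$ is identically $0$. For a random partition $p$, $\mathrm{E}_p(w)=\sum_{\pi\in\Pi(N)}p_N(\pi)\sum_{S\in\pi}w(S,\pi\setminus\{S\})$.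 A restriction operator $r$ assigns to every $N\subseteq\mathbf{U}$, $w\in\mathbb{W}(N)$, $i\in N$ a game $w^r_{-i}\in\mathbb{W}(N\setminus\{i\})$ such that $w^r_{-i}(S,\pi)$ depends only on the values $w(S,\pi_{+i\leadsto B})$, $B\in\pi\cup\{\emptyset\}$ (i.e., if $w,w'$ agree on these, then $w^r_{-i}(S,\pi)=w'^r_{-i}(S,\pi)$). It is path independent if $(w^r_{-i})^r_{-j}=(w^r_{-j})^r_{-i}$ for all $w$ and distinct $i,j$ (so $w^r_{-T}$ is well defined for $T\subseteq N$); it preserves null games if $(\mathbf{0}^N)^r_{-i}=\mathbf{0}^{N\setminus\{i\}}$. For path independent $r$, the $r$-potential $\mathrm{Pot}^r$ is the unique map on TUX games with $\mathrm{Pot}^r(\mathbf{0}^\emptyset)=0$ and $\sum_{i\in N}[\mathrm{Pot}^r(w)-\mathrm{Pot}^r(w^r_{-i})]=w(N,\emptyset)$ for all $w\in\mathbb{W}(N)$; equivalently $\mathrm{Pot}^r(w)=\mathrm{Pot}(v^r_w)$ with $v^r_w(S)=w^r_{-(N\setminus S)}(S,\emptyset)$. *)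

(* Defs.v *)
(* Players: a finite type U; coalitions: {set U};
   partitions of N: P : {set {set U}} with [partition P of N] (finset's
   'partition': blocks nonempty, pairwise disjoint, covering N; so the only
   partition of set0 is set0). Games are represented as total functions whose
   values outside the relevant domain are irrelevant. *)
From mathcomp Require Import all_boot all_order all_algebra.
Set Implicit Arguments.
Unset Strict Implicit.
Unset Printing Implicit Defensive.
Import Order.TTheory GRing.Theory Num.Theory.
Local Open Scope ring_scope.

Section Games.
Variables (U : finType) (R : realFieldType).

Definition tuxgame := {set U} -> {set {set U}} -> R.
Definition tugame := {set U} -> R.

Definition random_partition (p : {set U} -> {set {set U}} -> R) : Prop :=
  forall N : {set U},
    (forall P : {set {set U}}, partition P N -> 0 <= p N P) /\
    \sum_(P : {set {set U}} | partition P N) p N P = 1.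

Definition positive_rp (p : {set U} -> {set {set U}} -> R) : Prop :=
  forall (N : {set U}) (P : {set {set U}}), partition P N -> 0 < p N P.

Definition embedded (N S : {set U}) (P : {set {set U}}) : bool :=
  (S \subset N) && partition P (N :\: S).

Definition is_tux (N : {set U}) (w : tuxgame) : Prop :=
  forall P : {set {set U}}, partition P N -> w set0 P = 0.

Definition is_tu (v : tugame) : Prop := v set0 = 0.

Definition tux_of_tu (v : tugame) : tuxgame := fun S _ => v S.

Definition null_game : tuxgame := fun _ _ => 0.

Definition Pot (N : {set U}) (v : tugame) : R :=
  \sum_(S : {set U} | (S \subset N) && (S != set0))
     (((#|S|.-1)`! * (#|N| - #|S|)`!)%:R / (#|N|`!)%:R) * v S.

Definition Ep (p : {set U} -> {set {set U}} -> R) (N : {set U}) (w : tuxgame) : R :=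
  \sum_(P : {set {set U}} | partition P N) p N P * \sum_(S in P) w S (P :\ S).

Definition generates_pot (p : {set U} -> {set {set U}} -> R) : Prop :=
  forall (N : {set U}) (v : tugame), is_tu v -> Ep p N (tux_of_tu v) = Pot N v.

Definition plus_to (P : {set {set U}}) (i : U) (B : {set U}) : {set {set U}} :=
  if B == set0 then P :|: [set [set i]]
  else (P :\ B) :|: [set B :|: [set i]].

(* restriction operators: r N w i is w^r_{-i} *)
Definition restr_op := {set U} -> tuxgame -> U -> tuxgame.

Definition is_restriction (r : restr_op) : Prop :=
  (forall (N : {set U}) (w : tuxgame) (i : U),
      i \in N -> is_tux N w -> is_tux (N :\ i) (r N w i)) /\
  (forall (N : {set U}) (w w' : tuxgame) (i : U) (S : {set U}) (P : {set {set U}}),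
      i \in N -> is_tux N w -> is_tux N w' -> embedded (N :\ i) S P ->
      (forall B : {set U}, B \in P :|: [set set0] ->
          w S (plus_to P i B) = w' S (plus_to P i B)) ->
      r N w i S P = r N w' i S P).

Definition path_independent (r : restr_op) : Prop :=
  forall (N : {set U}) (w : tuxgame) (i j : U),
    is_tux N w -> i \in N -> j \in N -> i != j ->
    forall (S : {set U}) (P : {set {set U}}), embedded (N :\ i :\ j) S P ->
      r (N :\ i) (r N w i) j S P = r (N :\ j) (r N w j) i S P.

Definition preserves_null (r : restr_op) : Prop :=
  forall (N : {set U}) (i : U), i \in N ->
    forall (S : {set U}) (P : {set {set U}}), embedded (N :\ i) S P ->
      r N null_game i S P = 0.

Fixpoint potr_aux (r : restr_op) (k : nat) (N : {set U}) (w : tuxgame) : R :=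
  match k with
  | 0 => 0
  | k'.+1 => (w N set0 + \sum_(i in N) potr_aux r k' (N :\ i) (r N w i)) / (#|N|)%:R
  end.

Definition Potr (r : restr_op) (N : {set U}) (w : tuxgame) : R :=
  potr_aux r #|N| N w.

Definition rp (p : {set U} -> {set {set U}} -> R) : restr_op :=
  fun N w i S P =>
    ((#|N|)%:R / (#|N| - #|S|)%:R) *
    \sum_(B in P :|: [set set0])
       (p N ([set S] :|: plus_to P i B) / p (N :\ i) ([set S] :|: P))
         * w S (plus_to P i B).

Definition restr_eq (r r' : restr_op) : Prop :=
  forall (N : {set U}) (w : tuxgame) (i : U), is_tux N w -> i \in N ->
    forall (S : {set U}) (P : {set {set U}}), embedded (N :\ i) S P ->
      r N w i S P = r' N w i S P.

End Games.

(* Main.v *)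
Require Import Defs.
From mathcomp Require Import all_boot all_order all_algebra.
From mathcomp Require Import ring.
Import Order.TTheory GRing.Theory Num.Theory.
Local Open Scope ring_scope.
Set Implicit Arguments.
Unset Strict Implicit.
Unset Printing Implicit Defensive.

Section Part.
Variable U : finType.
Implicit Types (P Q : {set {set U}}) (D N S B X Y : {set U}) (k i j : U).

Lemma partP P D : reflect [/\ set0 \notin P, {in P, forall X, X \subset D},
   {in D, forall x, exists2 X, X \in P & x \in X} &
   {in P &, forall X Y x, x \in X -> x \in Y -> X = Y}] (partition P D).
Proof.
apply: (iffP and3P) => [[/eqP cP tP s0]|[s0 sub cov uq]].
  split => //.
  - by move=> X XP; rewrite -cP; apply: bigcup_sup.
  - by move=> x; rewrite -cP => /bigcupP[X XP xX]; exists X.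
  move=> X Y XP YP x xX xY; apply/eqP; apply/negPn/negP => nXY.
  have := (elimT trivIsetP tP) X Y XP YP nXY.
  by move/disjointFr => /(_ _ xX); rewrite xY.
split => //.
  apply/eqP/setP => x; apply/bigcupP/idP => [[X XP xX]|xD].
    exact: (subsetP (sub X XP)).
  by have [X XP xX] := cov x xD; exists X.
apply/trivIsetP => X Y XP YP nXY; rewrite disjoint_subset; apply/subsetP => x xX.
rewrite inE; apply/negP => xY.
by move: nXY; rewrite (uq X Y XP YP x xX xY) eqxx.
Qed.

Definition minus P k : {set {set U}} := [set X :\ k | X in P] :\ set0.

Lemma setD1_notin k X : k \notin X -> X :\ k = X.
Proof. by move=> kX; apply/setP => x; rewrite !inE; case: eqP => // ->; rewrite (negbTE kX). Qed.

Lemma setU1D1 k B : k \notin B -> (B :|: [set k]) :\ k = B.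
Proof. by move=> kB; rewrite setUC setU1K. Qed.

Lemma part_notin P D k X : partition P D -> k \notin D -> X \in P -> k \notin X.
Proof.
move=> /partP[_ sub _ _] kD XP; apply: contra kD; exact: (subsetP (sub X XP)).
Qed.

Lemma plus_to_part P D k B : partition P D -> k \notin D ->
  B \in P :|: [set set0] -> partition (plus_to P k B) (k |: D).
Proof.
move=> pP kD BP; have /partP[s0 sub cov uq] := pP.
have kX : forall X, X \in P -> k \notin X by move=> X; apply: part_notin pP kD.
apply/partP; rewrite /plus_to; case: eqP => [B0|/eqP Bn0].
  split.
  - rewrite !inE negb_or s0 /=; apply/eqP => /setP/(_ k); by rewrite !inE eqxx.
  - move=> X; rewrite !inE => /orP[XP|/eqP->]; last by rewrite sub1set setU11.
    exact: subset_trans (sub X XP) (subsetUr _ _).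
  - move=> x; rewrite !inE => /orP[/eqP->|xD].
      by exists [set k]; rewrite !inE ?eqxx ?orbT.
    by have [X XP xX] := cov x xD; exists X; rewrite ?inE ?XP.
  - move=> X Y; rewrite !inE => /orP[XP|/eqP->] /orP[YP|/eqP->] x //.
    + exact: uq.
    + by rewrite inE => xX /eqP xk; move: (kX X XP); rewrite -xk xX.
    + by rewrite inE => /eqP xk xY; move: (kX Y YP); rewrite -xk xY.
have BP' : B \in P by move: BP; rewrite !inE (negbTE Bn0) orbF.
split.
- rewrite !inE negb_or negb_and s0 orbT /=; apply/eqP => /setP/(_ k); by rewrite !inE eqxx orbT.
- move=> X; rewrite !inE => /orP[/andP[_ XP]|/eqP->].
    exact: subset_trans (sub X XP) (subsetUr _ _).
  by rewrite subUset sub1set setU11 andbT; apply: subset_trans (sub B BP') (subsetUr _ _).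
- move=> x; rewrite !inE => /orP[/eqP->|xD].
    by exists (B :|: [set k]); rewrite !inE ?eqxx ?orbT.
  have [X XP xX] := cov x xD; case: (X =P B) => [XB|/eqP XnB].
    by exists (B :|: [set k]); rewrite !inE ?eqxx ?orbT // -XB xX.
  by exists X; rewrite // !inE XnB XP.
- move=> X Y; rewrite !inE => /orP[/andP[XnB XP]|/eqP->] /orP[/andP[YnB YP]|/eqP->] x //.
  + exact: uq.
  + move=> xX; rewrite !inE => /orP[xB|/eqP xk]; last by move: (kX X XP); rewrite -xk xX.
    by move: XnB; rewrite (uq X B XP BP' x xX xB) eqxx.
  + rewrite !inE => /orP[xB|/eqP xk] xY; last by move: (kX Y YP); rewrite -xk xY.
    by move: YnB; rewrite (uq Y B YP BP' x xY xB) eqxx.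
Qed.


Lemma minus_plus P D k B : partition P D -> k \notin D ->
  B \in P :|: [set set0] -> minus (plus_to P k B) k = P.
Proof.
move=> pP kD BP; have /partP[s0 sub cov uq] := pP.
have kX : forall X, X \in P -> k \notin X by move=> X; apply: part_notin pP kD.
apply/setP => X; rewrite /minus /plus_to !inE.
case: (B =P set0) => [B0|/eqP Bn0].
  apply/andP/idP => [[Xn0 /imsetP[Y]]|XP].
    rewrite !inE => /orP[YP ->|/eqP-> XE]; first by rewrite setD1_notin ?kX.
    by move: Xn0; rewrite XE setDv eqxx.
  split; first by apply: contraNneq s0 => <-.
  by apply/imsetP; exists X; rewrite ?inE ?XP ?setD1_notin ?kX.
have BP' : B \in P by move: BP; rewrite !inE (negbTE Bn0) orbF.
apply/andP/idP => [[Xn0 /imsetP[Y]]|XP].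
  rewrite !inE => /orP[/andP[_ YP] ->|/eqP-> ->]; first by rewrite setD1_notin ?kX.
  by rewrite setU1D1 ?kX.
split; first by apply: contraNneq s0 => <-.
apply/imsetP; case: (X =P B) => [->|/eqP XnB].
  by exists (B :|: [set k]); rewrite ?inE ?eqxx ?orbT // setU1D1 ?kX.
by exists X; rewrite ?inE ?XP ?XnB ?setD1_notin ?kX.
Qed.

Lemma blk_plus P D k B : partition P D -> k \notin D ->
  B \in P :|: [set set0] -> pblock (plus_to P k B) k :\ k = B.
Proof.
move=> pP kD BP.
have kX : forall X, X \in P -> k \notin X by move=> X; apply: part_notin pP kD.
have tP := partition_trivIset (plus_to_part pP kD BP).
move: tP; rewrite /plus_to; case: eqP => [B0|/eqP Bn0] tP.
  rewrite (def_pblock tP (x := k) (B := [set k])) ?inE ?eqxx ?orbT //.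
  by rewrite setDv B0.
have BP' : B \in P by move: BP; rewrite !inE (negbTE Bn0) orbF.
rewrite (def_pblock tP (x := k) (B := B :|: [set k])) ?inE ?eqxx ?orbT //.
by rewrite setU1D1 ?kX.
Qed.

Lemma part_uniq P D X Y x : partition P D -> X \in P -> Y \in P -> x \in X -> x \in Y -> X = Y.
Proof. by move=> /partP[_ _ _ uq] XP YP; apply: uq. Qed.

Lemma plus_minus P D k : partition P D -> k \in D ->
  plus_to (minus P k) k (pblock P k :\ k) = P.
Proof.
move=> pP kD; have /partP[s0 sub cov uq] := pP.
have cP := cover_partition pP.
have CP : pblock P k \in P by apply: pblock_mem; rewrite cP.
have kC : k \in pblock P k by rewrite mem_pblock cP.
set C := pblock P k in CP kC *.
have kY : forall Y, Y \in P -> Y != C -> k \notin Y.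
  by move=> Y YP; apply: contra => kY; rewrite (uq Y C YP CP k kY kC).
rewrite /plus_to /minus; case: eqP => [B0|/eqP Bn0].
  have Ck : C = [set k].
    apply/setP => x; rewrite inE; case: (x =P k) => [->//|/eqP xk].
    by apply/negbTE; apply: contraNN xk => xC; move/setP: B0 => /(_ x); rewrite !inE xC andbT => /negbT; rewrite negbK.
  apply/setP => X; rewrite !inE; apply/idP/idP.
    case/orP => [/andP[Xn0 /imsetP[Y YP XE]]|/eqP->]; last by rewrite -Ck.
    case: (Y =P C) => [YC|/eqP YnC]; first by move: Xn0; rewrite XE YC Ck setDv eqxx.
    by rewrite XE setD1_notin ?kY.
  move=> XP; case: (X =P C) => [->|/eqP XnC]; first by rewrite Ck eqxx orbT.
  apply/orP; left; apply/andP; split; first by apply: contraNneq s0 => <-.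
  by apply/imsetP; exists X; rewrite ?setD1_notin ?kY.
have BC : (C :\ k) :|: [set k] = C by rewrite setUC setD1K.
apply/setP => X; rewrite !inE BC; apply/idP/idP.
  case/orP => [/andP[XnB /andP[Xn0 /imsetP[Y YP XE]]]|/eqP->//].
  case: (Y =P C) => [YC|/eqP YnC]; first by move: XnB; rewrite XE YC eqxx.
  by rewrite XE setD1_notin ?kY.
move=> XP; case: (X =P C) => [->|/eqP XnC]; first by rewrite ?eqxx orbT.
apply/orP; left; apply/andP; split.
  apply/eqP => XB; move/set0Pn: Bn0 => [x]; rewrite -XB => xX.
  have xC : x \in C by move: xX; rewrite XB inE => /andP[].
  by move: XnC; rewrite (uq X C XP CP x xX xC) eqxx.
apply/andP; split; first by apply: contraNneq s0 => <-.
by apply/imsetP; exists X; rewrite ?setD1_notin ?kY.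
Qed.

Lemma minus_part P D k : partition P D -> k \in D -> partition (minus P k) (D :\ k).
Proof.
move=> pP kD; have /partP[s0 sub cov uq] := pP.
apply/partP; split.
- by rewrite /minus !inE eqxx.
- move=> X; rewrite /minus !inE => /andP[_ /imsetP[Y YP ->]]; exact: setSD (sub Y YP).
- move=> x; rewrite inE => /andP[xk xD]; have [Y YP xY] := cov x xD.
  exists (Y :\ k); last by rewrite inE xk.
  rewrite /minus !inE; apply/andP; split; last by apply/imsetP; exists Y.
  by apply/set0Pn; exists x; rewrite inE xk.
- move=> X Y; rewrite /minus !inE => /andP[_ /imsetP[X' X'P ->]] /andP[_ /imsetP[Y' Y'P ->]] x.
  rewrite !inE => /andP[_ xX] /andP[_ xY]; by rewrite (uq X' Y' X'P Y'P x xX xY).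
Qed.

Lemma blk_mem P D k : partition P D -> k \in D ->
  pblock P k :\ k \in minus P k :|: [set set0].
Proof.
move=> pP kD; have cP := cover_partition pP.
have CP : pblock P k \in P by apply: pblock_mem; rewrite cP.
rewrite !inE; case: eqP => //= /eqP Bn0. rewrite orbF.
by apply/imsetP; exists (pblock P k).
Qed.

Lemma K1 (R : nmodType) N k (G : {set {set U}} -> R) : k \in N ->
  \sum_(P | partition P N) G P =
  \sum_(P | partition P (N :\ k)) \sum_(B in P :|: [set set0]) G (plus_to P k B).
Proof.
move=> kN; rewrite pair_big_dep.
rewrite (reindex_onto (fun x => plus_to x.1 k x.2) (fun P => (minus P k, pblock P k :\ k))) /=;
  last by move=> P pP; apply: plus_minus pP kN.
apply: eq_bigl => -[P B] /=.
have kD : k \notin N :\ k by rewrite !inE eqxx.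
apply/idP/idP.
  case/andP; move: (plus_to P k B) => Q pQ /eqP[<- <-].
  by rewrite (minus_part pQ kN) (blk_mem pQ kN).
case/andP => pP BP.
have := plus_to_part pP kD BP; rewrite setD1K // => ->.
by rewrite (minus_plus pP kD BP) (blk_plus pP kD BP) eqxx.
Qed.


Lemma setU_plus P k B T : T \in P -> B \in (P :\ T) :|: [set set0] ->
  T |: plus_to (P :\ T) k B = plus_to P k B.
Proof.
move=> TP; rewrite /plus_to; case: (B =P set0) => [_ _|/eqP Bn0].
  by rewrite setUA setD1K.
rewrite !inE (negbTE Bn0) orbF => /andP[BnT BP].
apply/setP => X; rewrite !inE; case: (X =P T) => [->|_] /=.
  by rewrite eq_sym BnT TP.
by [].
Qed.

Lemma plus_D1 P D k B T : partition P D -> k \notin D -> B \in P :|: [set set0] ->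
  T \in P -> T != B -> plus_to P k B :\ T = plus_to (P :\ T) k B.
Proof.
move=> pP kD BP TP TnB.
have kT : k \notin T by apply: part_notin pP kD TP.
rewrite /plus_to; case: (B =P set0) => [_|_]; apply/setP => X; rewrite !inE;
  case: (X =P T) => [->|_] //=.
  by apply/esym/negbTE; apply/eqP => /setP/(_ k); rewrite !inE eqxx (negbTE kT).
rewrite andbF; apply/esym/negbTE; apply/eqP => /setP/(_ k); by rewrite !inE eqxx orbT (negbTE kT).
Qed.

Lemma plus_notk P D k B T : partition P D -> k \notin D -> B \in P :|: [set set0] ->
  (T \in plus_to P k B) && (k \notin T) = (T \in P :\ B).
Proof.
move=> pP kD BP.
have kX : forall X, X \in P -> k \notin X by move=> X; apply: part_notin pP kD.
have s0 : set0 \notin P by case/and3P: pP.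
rewrite /plus_to; case: (B =P set0) => [B0|/eqP Bn0]; rewrite !inE.
  case: (T =P [set k]) => [->|_]; first by rewrite !inE eqxx orbT andbF; apply/esym/negbTE; rewrite negb_and; apply/orP; right; apply/negP => /kX; rewrite inE eqxx.
  rewrite orbF B0; case TP: (T \in P); last by rewrite !andbF.
  rewrite kX //= andbT; apply/esym/eqP => T0; by move: s0; rewrite -T0 TP.
case: (T =P B :|: [set k]) => [->|_]; first by rewrite !inE eqxx !orbT /=; apply/esym/negbTE; rewrite negb_and; apply/orP; right; apply/negP => /kX; rewrite !inE eqxx orbT.
by rewrite orbF; case TP: (T \in P); rewrite ?andbF // andbT kX // ?andbT.
Qed.

Lemma minus_minus P i j : minus (minus P i) j = [set X :\ i :\ j | X in P] :\ set0.
Proof.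
apply/setP => Y; rewrite /minus !inE; case: (Y =P set0) => //= /eqP Yn0.
apply/imsetP/imsetP => [[Z]|[X XP eY]].
  rewrite !inE => /andP[_ /imsetP[X XP eZ]] eY; exists X => //; by rewrite eY eZ.
exists (X :\ i) => //; rewrite !inE; apply/andP; split; last by apply/imsetP; exists X.
apply: contraNneq Yn0 => eX; rewrite eY eX; apply/eqP/setP => x; by rewrite !inE andbF.
Qed.

Lemma minusC P i j : minus (minus P i) j = minus (minus P j) i.
Proof.
rewrite !minus_minus; congr (_ :\ _); apply: eq_imset => X.
by rewrite !setDDl setUC.
Qed.

Lemma part_single P N : partition P N -> N \in P -> P = [set N].
Proof.
move=> pP NP; have /partP[s0 sub cov uq] := pP.
apply/setP => X; rewrite inE; apply/idP/eqP => [XP|->//].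
have /set0Pn[x xX] : X != set0 by apply: contraNneq s0 => <-.
exact: uq XP NP x xX (subsetP (sub X XP) x xX).
Qed.

Lemma part_set1 N : N != set0 -> partition [set N] N.
Proof.
move=> Nn0; apply/partP; split.
- by rewrite inE eq_sym.
- by move=> X; rewrite inE => /eqP->.
- by move=> x xN; exists N; rewrite ?inE.
- by move=> X Y; rewrite !inE => /eqP-> /eqP->.
Qed.

Lemma embedded_plus M S P l B : embedded (M :\ l) S P -> l \in M ->
  B \in P :|: [set set0] -> embedded M S (plus_to P l B).
Proof.
case/andP => SM pP lM BP.
have lS : l \notin S by apply/negP => /(subsetP SM); rewrite !inE eqxx.
have lD : l \notin (M :\ l) :\: S by rewrite !inE eqxx /= andbF.
rewrite /embedded (subset_trans SM (subsetDl _ _)) /=.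
have := plus_to_part pP lD BP.
have -> // : l |: ((M :\ l) :\: S) = M :\: S.
apply/setP => x; rewrite !inE; case: (x =P l) => [->|] //=.
by rewrite lM (negbTE lS).
Qed.

Lemma embedded_blk P N T : partition P N -> T \in P -> embedded N T (P :\ T).
Proof. by move=> pP TP; rewrite /embedded (partitionS pP TP) partitionD1. Qed.

Lemma part_addS P D S : partition P (D :\: S) -> S != set0 -> S \subset D ->
  partition (S |: P) D.
Proof.
move=> pP Sn0 SD.
have := partitionU1 pP Sn0; rewrite disjoint_subset.
have -> : S \subset [predC D :\: S].
  by apply/subsetP => x xS; rewrite !inE xS.
have -> // : S :|: (D :\: S) = D.
  by apply/setP => x; rewrite !inE; case xS: (x \in S) => //=; rewrite (subsetP SD x xS).
by apply.
Qed.

End Part.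

Section Games.
Variables (U : finType) (R : realFieldType) (p : {set U} -> {set {set U}} -> R).
Hypothesis pos : positive_rp p.
Hypothesis p1 : forall N : {set U}, N != set0 -> p N [set N] = (#|N|%:R)^-1.

Lemma pne0 N P : partition P N -> p N P != 0.
Proof. by move=> pP; apply: lt0r_neq0; apply: pos. Qed.

Lemma Ep_ext N (w w' : tuxgame U R) :
  (forall S P, embedded N S P -> w S P = w' S P) -> Ep p N w = Ep p N w'.
Proof.
move=> H; rewrite /Ep; apply: eq_bigr => P pP; congr (_ * _).
by apply: eq_bigr => S SP; apply: H; apply: embedded_blk.
Qed.

Lemma sumN N (g : {set {set U}} -> {set U} -> R) : N != set0 ->
  \sum_(P | partition P N) \sum_(T in P) (if T == N then g P T else 0) = g [set N] N.
Proof.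
move=> Nn0; rewrite (bigD1 [set N]) /= ?part_set1 //.
rewrite [X in _ + X]big1 ?addr0; last first.
  move=> P /andP[pP PnN]; apply: big1 => T TP; case: eqP => // TN; subst T.
  by rewrite (part_single pP TP) eqxx in PnN.
rewrite (bigD1 N) ?inE //= eqxx big1 ?addr0 // => T /andP[_ TnN].
by rewrite (negbTE TnN).
Qed.

Lemma natn0 (m n : nat) : (m < n)%N -> (n - m)%:R != 0 :> R.
Proof. by move=> mn; rewrite pnatr_eq0 subn_eq0 -ltnNge. Qed.

Lemma card_ltD1 (N S : {set U}) k : k \in N -> S \subset N :\ k -> (#|S| < #|N|)%N.
Proof.
move=> kN SN; apply: (leq_ltn_trans (subset_leq_card SN)).
by rewrite [X in (_ < X)%N](cardsD1 k) kN.
Qed.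

Lemma stepA (N : {set U}) (u : tuxgame U R) (k : U) : k \in N ->
  Ep p (N :\ k) (rp p N u k) =
  \sum_(P | partition P N) \sum_(T in P | k \notin T)
     (#|N|%:R / (#|N| - #|T|)%:R * p N P * u T (P :\ T)).
Proof.
move=> kN; rewrite [RHS](K1 _ kN) /Ep; apply: eq_bigr => s ps.
have kD : k \notin N :\ k by rewrite !inE eqxx.
have s0 : set0 \notin s by case/and3P: ps.
transitivity (\sum_(B in s :|: [set set0]) \sum_(T in s :\ B)
   (#|N|%:R / (#|N| - #|T|)%:R * p N (plus_to s k B) * u T (plus_to (s :\ T) k B))); last first.
  apply: eq_bigr => B BP; apply/esym.
  rewrite (eq_bigl (fun T => T \in s :\ B)); last by move=> T; rewrite (plus_notk _ ps kD BP).
  apply: eq_bigr => T; rewrite !inE => /andP[TnB Ts].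
  by rewrite (plus_D1 ps kD BP Ts TnB).
rewrite big_distrr /=.
transitivity (\sum_(S in s) \sum_(B in (s :\ S) :|: [set set0])
   (#|N|%:R / (#|N| - #|S|)%:R * p N (plus_to s k B) * u S (plus_to (s :\ S) k B))).
  apply: eq_bigr => S Ss; rewrite /rp setD1K // big_distrr /= big_distrr /=.
  apply: eq_bigr => B BP; rewrite (setU_plus _ Ss BP).
  have := natn0 (card_ltD1 kN (partitionS ps Ss)).
  have := pne0 ps; move: (p (N :\ k) s) => q qn0 hn; field; by rewrite qn0 hn.
rewrite (exchange_big_dep (fun B => B \in s :|: [set set0])) /=; last first.
  move=> S B Ss; rewrite !inE => /orP[/andP[_ ->]|->] //; by rewrite orbT.
apply: eq_big => [B|B BP]; first by [].
apply: eq_bigl => T; rewrite !inE; case: (B =P set0) => [->|/eqP Bn0] /=.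
  by rewrite orbT andbT; case Ts: (T \in s); rewrite ?andbF // andbT; apply/esym/eqP => T0; move: s0; rewrite -T0 Ts.
rewrite orbF; move: BP; rewrite !inE (negbTE Bn0) orbF => Bs.
by rewrite Bs andbT eq_sym andbC.
Qed.


Lemma R1 (N : {set U}) (u : tuxgame U R) : N != set0 ->
  #|N|%:R * Ep p N u = u N set0 + \sum_(k in N) Ep p (N :\ k) (rp p N u k).
Proof.
move=> Nn0.
under eq_bigr => k kN do rewrite (stepA u kN).
rewrite exchange_big /=.
set G := fun P T => #|N|%:R * p N P * u T (P :\ T).
transitivity (\sum_(P | partition P N) \sum_(T in P) G P T).
  rewrite /Ep big_distrr /=; apply: eq_bigr => P _; rewrite big_distrr /=.
  by rewrite big_distrr /=; apply: eq_bigr => T _; rewrite /G mulrA.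
transitivity (\sum_(P | partition P N) \sum_(T in P) (if T == N then G P T else 0) +
   \sum_(P | partition P N) \sum_(T in P) (if T == N then 0 else G P T)).
  rewrite -big_split /=; apply: eq_bigr => P _; rewrite -big_split /=.
  by apply: eq_bigr => T _; case: eqP; rewrite ?addr0 ?add0r.
rewrite sumN // /G setDv p1 // mulfV ?mul1r ?pnatr_eq0 ?cards_eq0 //; congr (_ + _).
apply: eq_bigr => P pP.
rewrite (exchange_big_dep (fun T => T \in P)) /=; last by move=> k T _ /andP[].
apply: eq_bigr => T TP.
rewrite (eq_bigl (fun k => k \in N :\: T)); last first.
  by move=> k; rewrite !inE TP /= andbC.
rewrite sumr_const.
have TN := partitionS pP TP.
have cT : #|N :\: T| = (#|N| - #|T|)%N by rewrite cardsD (setIidPr TN).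
rewrite cT; case: (T =P N) => [->|/eqP TnN]; first by rewrite subnn mulr0n.
have lt : (#|T| < #|N|)%N by apply: proper_card; rewrite properEneq TnN.
have := (natn0 lt : _ != 0 :> R); rewrite /G; move: (_ - _)%N => m hm; rewrite -[RHS]mulr_natl.
by field.
Qed.


Lemma K2 (M : {set U}) (i j : U) (P : {set {set U}}) (H : {set {set U}} -> R) :
  i \in M -> j \in M -> i != j -> partition P (M :\ i :\ j) ->
  \sum_(B' in P :|: [set set0]) \sum_(B in plus_to P j B' :|: [set set0])
      H (plus_to (plus_to P j B') i B)
  = \sum_(r | partition r M) (if minus (minus r i) j == P then H r else 0).
Proof.
move=> iM jM ij pP.
have jMi : j \in M :\ i by rewrite !inE eq_sym ij.
have iD : i \notin M :\ i by rewrite !inE eqxx.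
have jD : j \notin M :\ i :\ j by rewrite !inE eqxx.
rewrite (K1 _ iM).
transitivity (\sum_(s | partition s (M :\ i))
   (if minus s j == P then \sum_(B in s :|: [set set0]) H (plus_to s i B) else 0)); last first.
  apply: eq_bigr => s ps; case: eqP => [sP|snP].
    by apply: eq_bigr => B BP; rewrite (minus_plus ps iD BP) sP eqxx.
  by apply/esym/big1 => B BP; rewrite (minus_plus ps iD BP); case: eqP.
rewrite (K1 _ jMi).
transitivity (\sum_(t | partition t (M :\ i :\ j)) \sum_(B' in t :|: [set set0])
   (if t == P then \sum_(B in plus_to t j B' :|: [set set0]) H (plus_to (plus_to t j B') i B) else 0));
   last first.
  apply: eq_bigr => t pt; apply: eq_bigr => B' B'P.
  by rewrite (minus_plus pt jD B'P).
rewrite [RHS](bigD1 P) //= [X in _ = _ + X]big1 ?addr0; last first.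
  move=> t /andP[_ tnP]; apply: big1 => B' _; by rewrite (negbTE tnP).
by apply: eq_bigr => B' _; rewrite eqxx.
Qed.

Lemma rp_tux (N : {set U}) (u : tuxgame U R) (i : U) : is_tux N u -> i \in N ->
  is_tux (N :\ i) (rp p N u i).
Proof.
move=> tu iN P pP; rewrite /rp big1 ?mulr0 // => B BP.
have iD : i \notin N :\ i by rewrite !inE eqxx.
have := plus_to_part pP iD BP; rewrite setD1K // => /tu ->; by rewrite mulr0.
Qed.

Lemma setD_comm (N S : {set U}) (i j : U) : (N :\: S) :\ i :\ j = (N :\ i :\ j) :\: S.
Proof.
apply/setP => x; rewrite !inE.
by case: (x \in S); case: (x == i); case: (x == j); case: (x \in N).
Qed.

Lemma setD1C (N : {set U}) (i j : U) : N :\ i :\ j = N :\ j :\ i.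
Proof. by rewrite !setDDl setUC. Qed.

Lemma rp2 (N : {set U}) (u : tuxgame U R) (i j : U) (S : {set U}) (P : {set {set U}}) :
  i \in N -> j \in N -> i != j -> S != set0 -> embedded (N :\ i :\ j) S P ->
  rp p (N :\ i) (rp p N u i) j S P =
  (#|N :\ i|%:R / (#|N :\ i| - #|S|)%:R) * (#|N|%:R / (#|N| - #|S|)%:R)
   / p (N :\ i :\ j) (S |: P) *
  \sum_(r | partition r (N :\: S))
     (if minus (minus r i) j == P then p N (S |: r) * u S r else 0).
Proof.
move=> iN jN ij Sn0 /andP[SN pP].
have iS : i \notin S by apply/negP => /(subsetP SN); rewrite !inE eqxx andbF.
have jS : j \notin S by apply/negP => /(subsetP SN); rewrite !inE eqxx.
have iM : i \in N :\: S by rewrite inE iS.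
have jM : j \in N :\: S by rewrite inE jS.
have pP' : partition P ((N :\: S) :\ i :\ j) by rewrite setD_comm.
rewrite -(K2 (fun r => p N (S |: r) * u S r) iM jM ij pP').
rewrite /rp big_distrr [RHS]big_distrr /=; apply: eq_bigr => B' B'P.
have jD : j \notin (N :\ i :\ j) :\: S by rewrite !inE eqxx /= andbF.
have pQ := plus_to_part pP jD B'P.
have eQ : j |: ((N :\ i :\ j) :\: S) = (N :\ i) :\: S.
  apply/setP => x; rewrite !inE; case: (x =P j) => [->|] //=.
  by rewrite jS /= jN eq_sym ij.
rewrite eQ in pQ.
have SNi : S \subset N :\ i by apply: subset_trans SN (subsetDl _ _).
have pSQ := part_addS pQ Sn0 SNi.
have SNij : S \subset N :\ i :\ j by [].
have pSP := part_addS pP Sn0 SNij.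
have a0 := pne0 pSQ.
have q0 := pne0 pSP.
rewrite !big_distrr /=; apply: eq_bigr => B BP.
move: a0 q0; move: (p (N :\ i) _) (p (N :\ i :\ j) _) => a q a0 q0.
have h1 : (#|N :\ i| - #|S|)%:R != 0 :> R.
  apply: natn0; apply: (leq_ltn_trans (subset_leq_card SN)).
  by rewrite [X in (_ < X)%N](cardsD1 j) !inE eq_sym ij jN.
have h2 : (#|N| - #|S|)%:R != 0 :> R.
  by apply: natn0; apply: (card_ltD1 iN SNi).
field; by rewrite a0 q0 h1 h2.
Qed.


Lemma R2 (N : {set U}) (u : tuxgame U R) (i j : U) (S : {set U}) (P : {set {set U}}) :
  is_tux N u -> i \in N -> j \in N -> i != j -> embedded (N :\ i :\ j) S P ->
  rp p (N :\ i) (rp p N u i) j S P = rp p (N :\ j) (rp p N u j) i S P.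
Proof.
move=> tu iN jN ij eP.
have eP' : embedded (N :\ j :\ i) S P by rewrite setD1C.
have jNi : j \in N :\ i by rewrite !inE eq_sym ij.
have iNj : i \in N :\ j by rewrite !inE ij.
case: (S =P set0) => [S0|/eqP Sn0].
  subst S; move: eP eP'; rewrite /embedded !setD0 => /andP[_ pP] /andP[_ pP'].
  by rewrite (rp_tux (rp_tux tu iN) jNi pP) (rp_tux (rp_tux tu jN) iNj pP').
rewrite (rp2 u iN jN ij Sn0 eP) (rp2 u jN iN _ Sn0 eP'); last by rewrite eq_sym.
have cij : #|N :\ i| = #|N :\ j|.
  have := cardsD1 i N; have := cardsD1 j N; rewrite iN jN /= => -> /eqP.
  by rewrite eqSS => /eqP.
rewrite cij setD1C; congr (_ * _); apply: eq_bigr => r _; by rewrite minusC.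
Qed.

End Games.

Section Uniq.
Variables (U : finType) (R : realFieldType) (p : {set U} -> {set {set U}} -> R).
Hypothesis pos : positive_rp p.
Hypothesis p1 : forall N : {set U}, N != set0 -> p N [set N] = (#|N|%:R)^-1.

Definition supp (M S : {set U}) (u : tuxgame U R) :=
  forall S' P', embedded M S' P' -> S' != S -> u S' P' = 0.

Lemma rp_supp M S u l : supp M S u -> l \in M -> supp (M :\ l) S (rp p M u l).
Proof.
move=> H lM S' P' eP nS; rewrite /rp big1 ?mulr0 // => B BP.
by rewrite H ?mulr0 //; apply: embedded_plus.
Qed.

Lemma Ep_zero M (u : tuxgame U R) :
  (forall S' P', embedded M S' P' -> u S' P' = 0) -> Ep p M u = 0.
Proof.
move=> H; have -> : Ep p M u = Ep p M (@null_game U R) by apply: Ep_ext.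
by rewrite /Ep big1 // => P _; rewrite big1 ?mulr0.
Qed.

Lemma supp_out M S u : supp M S u -> ~~ (S \subset M) ->
  forall S' P', embedded M S' P' -> u S' P' = 0.
Proof.
move=> H nS S' P' eP; apply: H => //.
by apply: contraNneq nS => <-; case/andP: eP.
Qed.

Lemma supp_tux M S u : S != set0 -> supp M S u -> is_tux M u.
Proof.
move=> Sn0 H P pP; apply: H; last by rewrite eq_sym.
by rewrite /embedded sub0set setD0.
Qed.


Lemma Ep_reduce M a S k : S != set0 -> supp M S a -> k \in M -> k \notin S ->
  (forall l, l \in M -> l \notin S ->
     Ep p (M :\ l) (rp p M a l) = Ep p (M :\ k) (rp p M a k)) ->
  #|M|%:R * Ep p M a = #|M :\: S|%:R * Ep p (M :\ k) (rp p M a k).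
Proof.
move=> Sn0 sa kM kS H.
have Mn0 : M != set0 by apply/set0Pn; exists k.
rewrite (R1 pos p1 _ Mn0).
have -> : a M set0 = 0.
  apply: sa; first by rewrite /embedded subxx setDv partition_set0 eqxx.
  by apply: contraNneq kS => <-.
rewrite add0r.
transitivity (\sum_(l in M) (if l \notin S then Ep p (M :\ k) (rp p M a k) else 0)).
  apply: eq_bigr => l lM; case: ifP => [lS|/negbFE lS]; first exact: H.
  apply: Ep_zero; apply: (supp_out (rp_supp sa lM)).
  by apply/negP => /subsetP/(_ l lS); rewrite !inE eqxx.
rewrite -big_mkcondr /= (eq_bigl (fun l => l \in M :\: S)); last first.
  by move=> l; rewrite !inE andbC.
by rewrite sumr_const mulr_natl.
Qed.

Lemma card_DS (M S : {set U}) : S \subset M -> #|M :\: S| = (#|M| - #|S|)%N.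
Proof. by move=> SM; rewrite cardsD (setIidPr SM). Qed.

Lemma lemmaE n : forall (M : {set U}), (#|M| <= n)%N -> forall (j k : U) (a b : tuxgame U R) (S : {set U}),
  j \in M -> k \in M -> j != k -> S != set0 -> S \subset M :\ j :\ k ->
  supp (M :\ j) S a -> supp (M :\ k) S b ->
  (forall S' P', embedded (M :\ j :\ k) S' P' ->
      rp p (M :\ j) a k S' P' = rp p (M :\ k) b j S' P') ->
  Ep p (M :\ j) a = Ep p (M :\ k) b.
Proof.
elim: n => [|n IH] M Mn j k a b S jM kM jk Sn0 SM sa sb hab.
  by move: Mn; rewrite leqn0 cards_eq0 => /eqP M0; rewrite M0 inE in jM.
have cM := cardsD1 j M; rewrite jM in cM.
have cMk := cardsD1 k M; rewrite kM in cMk.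
have kMj : k \in M :\ j by rewrite !inE eq_sym jk.
have jMk : j \in M :\ k by rewrite !inE jk.
have kS : k \notin S by apply/negP => /(subsetP SM); rewrite !inE eqxx.
have jS : j \notin S by apply/negP => /(subsetP SM); rewrite !inE eqxx andbF.
have red : forall (j k : U) (a : tuxgame U R), j \in M -> k \in M :\ j -> k \notin S ->
    S \subset M :\ j -> supp (M :\ j) S a ->
    #|M :\ j|%:R * Ep p (M :\ j) a = #|M :\ j :\: S|%:R * Ep p (M :\ j :\ k) (rp p (M :\ j) a k).
  move=> j' k' a' j'M k'M k'S SMj sa'.
  apply: Ep_reduce => // l lM lS.
  case: (l =P k') => [->//|/eqP lk].
  have c' := cardsD1 j' M; rewrite j'M in c'.
  apply: (IH (M :\ j') _ l k' _ _ S) => //.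
  - by move: Mn; rewrite c' add1n ltnS.
  - apply/subsetP => x xS.
    have := subsetP SMj x xS; rewrite !inE => /andP[-> ->].
    have xk : x != k' by apply: contraNneq k'S => <-.
    have xl : x != l by apply: contraNneq lS => <-.
    by rewrite xk xl.
  - exact: rp_supp.
  - exact: rp_supp.
  - move=> S' P' eP; apply: R2 => //; first exact: supp_tux sa'.
have SMj : S \subset M :\ j by apply: subset_trans SM (subsetDl _ _).
have SMk : S \subset M :\ k.
  apply/subsetP => x xS; have := subsetP SM x xS; rewrite !inE => /and3P[-> _ ->] //.
have ea := red j k a jM kMj kS SMj sa.
have eb := red k j b kM jMk jS SMk sb.
have cjk : #|M :\ j| = #|M :\ k|.
  by move: cM; rewrite cMk /= => /eqP; rewrite eqSS => /eqP.
have cS : #|M :\ j :\: S| = #|M :\ k :\: S| by rewrite (card_DS SMj) (card_DS SMk) cjk.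
have eE : Ep p (M :\ j :\ k) (rp p (M :\ j) a k) = Ep p (M :\ k :\ j) (rp p (M :\ k) b j).
  rewrite [M :\ k :\ j]setD1C; apply: Ep_ext => S' P' eP; exact: hab.
have n0 : #|M :\ j|%:R != 0 :> R.
  by rewrite pnatr_eq0 -lt0n; apply/card_gt0P; exists k.
by apply: (mulfI n0); rewrite ea cjk eb cS eE.
Qed.


Lemma uniq_core (r' : restr_op U R) (N : {set U}) (w : tuxgame U R) (i : U)
    (S : {set U}) (pi : {set {set U}}) :
  i \in N -> embedded (N :\ i) S pi -> S != set0 ->
  (forall S' P', ~~ ((S' == S) && (minus P' i == pi)) -> w S' P' = 0) ->
  (forall j, j \in N -> forall S' P', embedded (N :\ j) S' P' ->
      (forall B, B \in P' :|: [set set0] -> w S' (plus_to P' j B) = 0) ->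
      r' N w j S' P' = 0) ->
  #|N|%:R * Ep p N w = w N set0 + \sum_(j in N) Ep p (N :\ j) (r' N w j) ->
  (forall j k, j \in N -> k \in N -> j != k -> forall S' P', embedded (N :\ j :\ k) S' P' ->
      rp p (N :\ j) (r' N w j) k S' P' = rp p (N :\ k) (r' N w k) j S' P') ->
  #|N|%:R * Ep p N w = #|N :\: S|%:R * (p (N :\ i) (S |: pi) * r' N w i S pi).
Proof.
move=> iN /andP[SNi ppi] Sn0 ws h1 h2 h3.
have iS : i \notin S by apply/negP => /(subsetP SNi); rewrite !inE eqxx.
have su : forall j, j \in N -> supp (N :\ j) S (r' N w j).
  move=> j jN S' P' eP nS; apply: h1 => // B BP; apply: ws; by rewrite (negbTE nS).
rewrite h2.
have -> : w N set0 = 0.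
  by apply: ws; apply/negP => /andP[/eqP NS _]; move: iS; rewrite -NS iN.
rewrite add0r.
transitivity (\sum_(l in N) (if l \notin S then Ep p (N :\ i) (r' N w i) else 0)).
  apply: eq_bigr => l lN; case: ifP => [lS|/negbFE lS].
    case: (l =P i) => [->//|/eqP li].
    apply: (@lemmaE #|N| N (leqnn _) l i _ _ S) => //.
    - apply/subsetP => x xS; have := subsetP SNi x xS; rewrite !inE => /andP[-> ->].
      by rewrite andbT; apply: contraNneq lS => <-.
    - exact: su.
    - exact: su.
    - exact: h3.
  apply: Ep_zero; apply: (supp_out (su l lN)).
  by apply/negP => /subsetP/(_ l lS); rewrite !inE eqxx.
rewrite -big_mkcondr /= (eq_bigl (fun l => l \in N :\: S)); last first.
  by move=> l; rewrite !inE andbC.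
rewrite sumr_const -[LHS]mulr_natl; congr (_ * _).
have Spi : S \notin pi.
  apply/negP => /(partitionS ppi) /subsetP SS; move/set0Pn: Sn0 => [x xS].
  by have := SS x xS; rewrite inE xS.
have z : forall S' P', embedded (N :\ i) S' P' -> ~~ ((S' == S) && (P' == pi)) ->
    r' N w i S' P' = 0.
  move=> S' P' eP nSP; case: (S' =P S) => [eS|/eqP nS]; last exact: (su i iN S' P' eP nS).
  subst S'; rewrite eqxx /= in nSP.
  apply: h1 => // B BP; apply: ws; rewrite eqxx /=.
  move: eP => /andP[_ pP'].
  have iD : i \notin (N :\ i) :\: S by rewrite !inE eqxx andbF.
  by rewrite (minus_plus pP' iD BP).
have pSpi : partition (S |: pi) (N :\ i) by apply: part_addS.
rewrite /Ep (bigD1 (S |: pi)) //= [X in _ + X]big1 ?addr0; last first.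
  move=> r /andP[pr rn]; rewrite big1 ?mulr0 // => T Tr.
  apply: z; first exact: embedded_blk.
  apply/negP => /andP[/eqP TS /eqP rT]; move: rn; rewrite -rT TS setD1K ?eqxx //.
  by rewrite -TS.
congr (_ * _); rewrite (bigD1 S) ?setU11 //= setU1K // big1 ?addr0 // => T /andP[Tr TnS].
by apply: z; [exact: embedded_blk | rewrite (negbTE TnS)].
Qed.

End Uniq.

Lemma p1_of (U : finType) (R : realFieldType) (p : {set U} -> {set {set U}} -> R) :
  generates_pot p -> forall N : {set U}, N != set0 -> p N [set N] = (#|N|%:R)^-1.
Proof.
move=> gp N Nn0.
pose v := fun S : {set U} => if S == N then (1 : R) else 0.
have tv : is_tu v by rewrite /is_tu /v eq_sym (negbTE Nn0).
have := gp N v tv; rewrite /Ep /tux_of_tu.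
have -> : \sum_(P | partition P N) p N P * \sum_(S in P) v S =
    \sum_(P | partition P N) \sum_(T in P) (if T == N then p N P else 0).
  apply: eq_bigr => P _; rewrite big_distrr /=; apply: eq_bigr => T _.
  by rewrite /v; case: eqP; rewrite ?mulr1 ?mulr0.
rewrite (sumN (fun P _ => p N P)) // => ->.
rewrite /Pot (bigD1 N) /=; last by rewrite subxx Nn0.
rewrite big1 ?addr0; last by move=> S /andP[_ SnN]; rewrite /v (negbTE SnN) mulr0.
rewrite /v eqxx mulr1 subnn fact0 muln1.
case e: #|N| => [|n]; first by move: Nn0; rewrite -cards_eq0 e.
rewrite factS /= natrM.
have h1 : (n`!)%:R != 0 :> R by rewrite pnatr_eq0 -lt0n fact_gt0.
have h2 : (n.+1)%:R != 0 :> R by rewrite pnatr_eq0.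
by field; rewrite h1 andbT addrC natr1.
Qed.

Lemma Potr_rec (U : finType) (R : realFieldType) (r : restr_op U R) (N : {set U}) (w : tuxgame U R) :
  N != set0 ->
  Potr r N w = (w N set0 + \sum_(i in N) Potr r (N :\ i) (r N w i)) / #|N|%:R.
Proof.
move=> Nn0; rewrite /Potr.
case e: #|N| => [|n]; first by move: Nn0; rewrite -cards_eq0 e.
rewrite /= e; congr ((_ + _) / _); apply: eq_bigr => i iN.
have := cardsD1 i N; rewrite iN e add1n => -[->].
by [].
Qed.

Lemma rp_ext (U : finType) (R : realFieldType) (p : {set U} -> {set {set U}} -> R)
  (M : {set U}) (a b : tuxgame U R) (l : U) (S : {set U}) (P : {set {set U}}) :
  embedded (M :\ l) S P -> l \in M ->
  (forall S' P', embedded M S' P' -> a S' P' = b S' P') ->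
  rp p M a l S P = rp p M b l S P.
Proof.
move=> eP lM H; rewrite /rp; congr (_ * _); apply: eq_bigr => B BP.
by rewrite H //; apply: embedded_plus.
Qed.

Unset Implicit Arguments.

Theorem theorem4 (U : finType) (R : realFieldType)
    (p : {set U} -> {set {set U}} -> R) :
  random_partition p -> positive_rp p -> generates_pot p ->
  forall r : restr_op U R, is_restriction r ->
    (path_independent r /\ preserves_null r /\
       (forall (N : {set U}) (w : tuxgame U R), is_tux N w -> Potr r N w = Ep p N w))
    <-> restr_eq r (rp p).
Proof.
move=> _ posP gp r [rt rl].
have p1 := p1_of gp.
split.
- case=> pir [pn pe].
  suff H : forall n (N : {set U}), (#|N| <= n)%N -> forall (w : tuxgame U R) i,
      is_tux N w -> i \in N -> forall S P, embedded (N :\ i) S P ->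
      r N w i S P = rp p N w i S P.
    by move=> N w i tw iN S P eP; apply: (H #|N|).
  elim=> [|n IH] N Nn w i tw iN S pi epi.
    by move: Nn; rewrite leqn0 cards_eq0 => /eqP N0; rewrite N0 inE in iN.
  have Nn0 : N != set0 by apply/set0Pn; exists i.
  case: (S =P set0) => [S0|/eqP Sn0].
    subst S; have ppi : partition pi (N :\ i) by move: epi; rewrite /embedded setD0 => /andP[_].
    by rewrite (rt N w i iN tw pi ppi) (rp_tux p tw iN ppi).
  have ppi' : partition pi ((N :\ i) :\: S) by case/andP: epi.
  have iD : i \notin (N :\ i) :\: S by rewrite !inE eqxx andbF.
  pose w' := fun S' P' => if (S' == S) && (minus P' i == pi) then w S' P' else 0.
  have tw' : is_tux N w'.
    move=> P _; rewrite /w'; case: (set0 =P S) => //= S0.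
    by move: Sn0; rewrite -S0 eqxx.
  have agree : forall B, B \in pi :|: [set set0] ->
      w S (plus_to pi i B) = w' S (plus_to pi i B).
    by move=> B BP; rewrite /w' eqxx /= (minus_plus ppi' iD BP) eqxx.
  rewrite (rl N w w' i S pi iN tw tw' epi agree).
  have -> : rp p N w i S pi = rp p N w' i S pi.
    by rewrite /rp; congr (_ * _); apply: eq_bigr => B BP; rewrite agree.
  have ws : forall S' P', ~~ ((S' == S) && (minus P' i == pi)) -> w' S' P' = 0.
    by move=> S' P' h; rewrite /w' (negbTE h).
  have cD : forall j, j \in N -> (#|N :\ j| <= n)%N.
    by move=> j jN; move: Nn; rewrite (cardsD1 j N) jN add1n ltnS.
  have h1r : forall j, j \in N -> forall S' P', embedded (N :\ j) S' P' ->
      (forall B, B \in P' :|: [set set0] -> w' S' (plus_to P' j B) = 0) ->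
      r N w' j S' P' = 0.
    move=> j jN S' P' eP hz.
    rewrite (rl N w' (@null_game U R) j S' P' jN tw' _ eP); first exact: pn.
      by move=> P _.
    by move=> B BP; rewrite hz.
  have nN : #|N|%:R != 0 :> R by rewrite pnatr_eq0 cards_eq0.
  have h2r : #|N|%:R * Ep p N w' = w' N set0 + \sum_(j in N) Ep p (N :\ j) (r N w' j).
    have := pe N w' tw'; rewrite Potr_rec //.
    under eq_bigr => j jN do rewrite (pe (N :\ j) (r N w' j) (rt N w' j jN tw')).
    move=> <-; by field.
  have h3r : forall j k, j \in N -> k \in N -> j != k -> forall S' P',
      embedded (N :\ j :\ k) S' P' ->
      rp p (N :\ j) (r N w' j) k S' P' = rp p (N :\ k) (r N w' k) j S' P'.
    move=> j k jN kN jk S' P' eP.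
    have kNj : k \in N :\ j by rewrite !inE eq_sym jk.
    have jNk : j \in N :\ k by rewrite !inE jk.
    have eP' : embedded (N :\ k :\ j) S' P' by rewrite setD1C.
    rewrite -(IH (N :\ j) (cD j jN) (r N w' j) k (rt N w' j jN tw') kNj S' P' eP).
    rewrite -(IH (N :\ k) (cD k kN) (r N w' k) j (rt N w' k kN tw') jNk S' P' eP').
    exact: pir.
  have Ur := uniq_core posP p1 iN epi Sn0 ws h1r h2r h3r.
  have h1p : forall j, j \in N -> forall S' P', embedded (N :\ j) S' P' ->
      (forall B, B \in P' :|: [set set0] -> w' S' (plus_to P' j B) = 0) ->
      rp p N w' j S' P' = 0.
    by move=> j jN S' P' eP hz; rewrite /rp big1 ?mulr0 // => B BP; rewrite hz ?mulr0.
  have h2p := R1 posP p1 w' Nn0.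
  have h3p : forall j k, j \in N -> k \in N -> j != k -> forall S' P',
      embedded (N :\ j :\ k) S' P' ->
      rp p (N :\ j) (rp p N w' j) k S' P' = rp p (N :\ k) (rp p N w' k) j S' P'.
    by move=> j k jN kN jk S' P' eP; apply: R2.
  have Up := uniq_core posP p1 iN epi Sn0 ws h1p h2p h3p.
  have nS : #|N :\: S|%:R != 0 :> R.
    have iS : i \notin S by case/andP: epi => SN _; apply/negP => /(subsetP SN); rewrite !inE eqxx.
    by rewrite pnatr_eq0 cards_eq0; apply/set0Pn; exists i; rewrite !inE iS.
  have pS : p (N :\ i) (S |: pi) != 0.
    apply: (pne0 posP); apply: part_addS => //; by case/andP: epi.
  by apply: (mulfI pS); apply: (mulfI nS); rewrite -Ur -Up.
- move=> req; split; [|split].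
  + move=> N w i j tw iN jN ij S P eP.
    have jNi : j \in N :\ i by rewrite !inE eq_sym ij.
    have iNj : i \in N :\ j by rewrite !inE ij.
    have eP' : embedded (N :\ j :\ i) S P by rewrite setD1C.
    rewrite (req (N :\ i) (r N w i) j (rt N w i iN tw) jNi S P eP).
    rewrite (rp_ext p eP jNi (fun S' P' e => req N w i tw iN S' P' e)).
    rewrite (req (N :\ j) (r N w j) i (rt N w j jN tw) iNj S P eP').
    rewrite (rp_ext p eP' iNj (fun S' P' e => req N w j tw jN S' P' e)).
    exact: R2.
  + move=> N i iN S P eP.
    have tn : is_tux N (@null_game U R) by move=> P' _.
    rewrite (req N (@null_game U R) i tn iN S P eP) /rp big1 ?mulr0 // => B _; by rewrite /null_game mulr0.
  + suff H : forall n (N : {set U}), (#|N| <= n)%N -> forall w, is_tux N w -> Potr r N w = Ep p N w.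
      by move=> N w tw; apply: (H #|N|).
    elim=> [|n IH] N Nn w tw.
      move: Nn; rewrite leqn0 cards_eq0 => /eqP ->.
      rewrite /Potr cards0 /= /Ep big1 // => P; rewrite partition_set0 => /eqP ->.
      by rewrite big_set0 mulr0.
    case: (N =P set0) => [->|/eqP Nn0].
      rewrite /Potr cards0 /= /Ep big1 // => P; rewrite partition_set0 => /eqP ->.
      by rewrite big_set0 mulr0.
    have cD : forall j, j \in N -> (#|N :\ j| <= n)%N.
      by move=> j jN; move: Nn; rewrite (cardsD1 j N) jN add1n ltnS.
    rewrite Potr_rec //.
    under eq_bigr => j jN do rewrite (IH (N :\ j) (cD j jN) (r N w j) (rt N w j jN tw))
      (Ep_ext p (w' := rp p N w j) (fun S' P' e => req N w j tw jN S' P' e)).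
    have nN : #|N|%:R != 0 :> R by rewrite pnatr_eq0 cards_eq0.
    rewrite -(R1 posP p1 w Nn0); by field.
Qed.
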